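(* Consider the spot market described in the context, with fixed leader productions $\mathbf x\in\mathbb{R}_+^M$, and suppose $f_j=f$ for every follower $j$. Then the spot market has a unique Nash equilibrium, given for every follower $j$ by \[y_j=\Big[\frac1{N+1}\Big(\alpha_y+f-\sum_{i=1}^Mx_i\Big)\Big]_0^k.\]
   Context: Model: $M\ge1$ leaders, $N\ge2$ followers; inverse demand $P(q)=\alpha-\beta q$, $\alpha,\beta>0$; follower marginal cost $c>0$; each follower has capacity $k>0$. Given leader productions $x_1,\dots,x_M\ge0$ and follower forward positions $f_1,\dots,f_N\in\mathbb{R}$, the spot market is the game among the $N$ followers in which follower $j$ chooses $y_j\in[0,k]$ to maximize $P(\sum_i x_i+\sum_{j'}y_{j'})(y_j-f_j)-cy_j$. Normalized follower demand: $\alpha_y=(\alpha-c)/\beta$. For $a\le b$, $[z]_a^b=\min(\max(z,a),b)$. *)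

(* Defs.v *)
From mathcomp Require Import all_boot all_order all_algebra.
Set Implicit Arguments. Unset Strict Implicit. Unset Printing Implicit Defensive.
Import Order.TTheory GRing.Theory Num.Theory.
Local Open Scope ring_scope.

Definition clamp (R : realFieldType) (a b z : R) : R := Num.min (Num.max z a) b.

Definition price (R : realFieldType) (alpha beta q : R) : R := alpha - beta * q.

Definition upd (R : realFieldType) (N : nat) (y : 'I_N -> R) (j : 'I_N) (z : R)
  : 'I_N -> R := fun i => if i == j then z else y i.

Definition spot_payoff (R : realFieldType) (M N : nat) (alpha beta c : R)
  (x : 'I_M -> R) (f : 'I_N -> R) (y : 'I_N -> R) (j : 'I_N) : R :=
  price alpha beta (\sum_(i < M) x i + \sum_(j' < N) y j') * (y j - f j) - c * y j.

Definition spot_NE (R : realFieldType) (M N : nat) (alpha beta c k : R)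
  (x : 'I_M -> R) (f : 'I_N -> R) (y : 'I_N -> R) : Prop :=
  forall j : 'I_N, (0 <= y j <= k) /\
    forall z : R, 0 <= z <= k ->
      spot_payoff alpha beta c x f (upd y j z) j <= spot_payoff alpha beta c x f y j.

(* Main.v *)
Require Import Defs.
From mathcomp Require Import all_boot all_order all_algebra ring lra.
Import Order.TTheory GRing.Theory Num.Theory.
Local Open Scope ring_scope.
Lemma clampP (R : realFieldType) (k C t : R) : 0 < k ->
  (t = clamp 0 k C <-> [/\ 0 <= t <= k, (0 < t -> t <= C) & (t < k -> C <= t)]).
Proof.
move=> hk; rewrite /clamp /Order.max /Order.min.
case: (ltP C 0) => h1; [rewrite hk | case: (ltP C k) => h2].
all: split; [move=> ->; split; [apply/andP; split|move=> ?|move=> ?]; lra|].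
all: case=> /andP [a1 a2] a3 a4.
all: case: (lerP t 0) => b1; [|have := a3 b1]; case: (lerP k t) => b2; try have := a4 b2; lra.
Qed.
Lemma BR_iff (R : realFieldType) (k t C : R) : 0 < k -> 0 <= t <= k ->
  ((forall z, 0 <= z <= k -> (z - t) * (C - z) <= 0) <-> t = clamp 0 k C).
Proof.
move=> hk /andP [t0 tk]; rewrite clampP //; split.
- move=> H; split; [by apply/andP|move=> ht|move=> ht].
  + case: (lerP t C) => // hC. case: (ltP C 0) => hC0.
    * have : 0 <= t/2 <= k by apply/andP; lra.
      move/H; nra.
    * have : 0 <= (C + t)/2 <= k by apply/andP; lra.
      move/H; nra.
  + case: (lerP C t) => // hC. case: (ltP k C) => hC0.
    * have : 0 <= (t+k)/2 <= k by apply/andP; lra.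
      move/H; nra.
    * have : 0 <= (C + t)/2 <= k by apply/andP; lra.
      move/H; nra.
- case=> _ a3 a4 z /andP [z0 zk].
  case: (lerP t 0) => b1.
  + have hC : C <= t by apply: a4; lra.
    have -> : t = 0 by lra. have : C - z <= 0 by lra. rewrite subr0; nra.
  + have h3 := a3 b1. case: (lerP k t) => b2.
    * have -> : t = k by lra. have : 0 <= C - z by lra. have : z - k <= 0 by lra. nra.
    * have h4 := a4 b2. have -> : C = t by lra.
      have -> : (z-t)*(t-z) = - ((z-t)^+2) by ring. by rewrite oppr_le0 sqr_ge0.
Qed.
Lemma fix_iff (R : realFieldType) (k t u n : R) : 0 < k -> 0 <= n ->
  (t = clamp 0 k ((n+1)*u - n*t) <-> t = clamp 0 k u).
Proof.
move=> hk hn; rewrite !clampP //; split; case=> a1 a2 a3; split=> // h.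
- have := a2 h; nra.
- have := a3 h; nra.
- have := a2 h; nra.
- have := a3 h; nra.
Qed.
Lemma sum_upd (R : realFieldType) N (y : 'I_N -> R) j z :
  \sum_i upd y j z i = \sum_i y i - y j + z.
Proof.
rewrite (bigD1 j) //= [in RHS](bigD1 j) //= /upd eqxx.
rewrite (eq_bigr y); last by move=> i /negbTE ->.
ring.
Qed.
Lemma sum_cst (R : realFieldType) N (t : R) : \sum_(i < N) t = N%:R * t.
Proof. by rewrite sumr_const card_ord mulr_natl. Qed.
Lemma diff_eq (R : realFieldType) (al be c a Q f z t : R) : be != 0 -> a = (al-c)/be ->
 ((al - be*(Q+z))*(z-f) - c*z) - ((al - be*(Q+t))*(t-f) - c*t) = be*(z-t)*(a+f-Q-t-z).
Proof. move=> hb ->; field; exact hb. Qed.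
Theorem proposition2 (R : realFieldType) (M N : nat) (alpha beta c k f : R)
  (x : 'I_M -> R) (fs : 'I_N -> R) :
  (1 <= M)%N -> (2 <= N)%N ->
  0 < alpha -> 0 < beta -> 0 < c -> 0 < k ->
  (forall i, 0 <= x i) ->
  (forall j, fs j = f) ->
  forall y : 'I_N -> R,
    spot_NE alpha beta c k x fs y <->
    (forall j : 'I_N,
       y j = clamp 0 k ((N.+1%:R)^-1 * ((alpha - c) / beta + f - \sum_(i < M) x i))).
Proof.
move=> _ _ _ hb _ hk _ hf y.
set A := (_ / _ + f - _).
have hN : N.+1%:R = N%:R + 1 :> R by rewrite -natr1.
have hN0 : (0:R) <= N%:R by apply: ler0n.
have hA : A = (N%:R + 1) * ((N.+1%:R)^-1 * A).
  by rewrite mulrA -hN mulfV ?mul1r // pnatr_eq0.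
set u := (_ * A) in hA *.
have key : forall j z, spot_payoff alpha beta c x fs (upd y j z) j - spot_payoff alpha beta c x fs y j
   = beta * ((z - y j) * ((A - \sum_i y i) - z)).
  move=> j z; rewrite /spot_payoff /price sum_upd /upd eqxx hf.
  rewrite /A; field; by rewrite gt_eqF.
have BR : forall j, (0 <= y j <= k) ->
   ((forall z, 0 <= z <= k -> spot_payoff alpha beta c x fs (upd y j z) j <= spot_payoff alpha beta c x fs y j)
    <-> y j = clamp 0 k (A - \sum_i y i)).
  move=> j hj; rewrite -BR_iff //; split=> H z hz; have := H z hz.
  - by rewrite -subr_le0 key pmulr_rle0.
  - by rewrite -(pmulr_rle0 _ hb) -key subr_le0.
split.
- move=> NE.
  have hy : forall j, y j = clamp 0 k (A - \sum_i y i).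
    by move=> j; have [h1 h2] := NE j; apply/(BR j h1).
  set t := clamp 0 k (A - \sum_i y i) in hy.
  have hY : \sum_i y i = N%:R * t by rewrite (eq_bigr (fun _ => t)) ?sum_cst.
  have ht : t = clamp 0 k ((N%:R + 1) * u - N%:R * t) by rewrite -hA -hY.
  move=> j; rewrite hy. exact: (proj1 (fix_iff _ _ _ _ _ hk hN0) ht).
- move=> hy.
  set t := clamp 0 k u in hy.
  have hY : \sum_i y i = N%:R * t by rewrite (eq_bigr (fun _ => t)) ?sum_cst.
  have ht : t = clamp 0 k u by [].
  have ht01 : 0 <= t <= k by case: (proj1 (clampP _ _ _ _ hk) ht).
  move=> j; split; first by rewrite hy.
  apply/(BR j); first by rewrite hy.
  rewrite hy hY {1}hA; exact: (proj2 (fix_iff _ _ _ _ _ hk hN0) ht).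
Qed.
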